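(* Let $P,Q\in\mathbb{H}[q_1,q_2]$. If ${\rm Res}(P,Q;q_1)\equiv0$, then ${\rm Res}(P^s,Q^s;q_1)\equiv0$; if ${\rm Res}(P,Q;q_2)\equiv0$, then ${\rm Res}(P^s,Q^s;q_2)\equiv0$.
   Context: $\mathbb{H}$ denotes the quaternions. A slice regular polynomial in two quaternionic variables is a function $\mathbb{H}^2\to\mathbb{H}$ of the form $P(q_1,q_2)=\sum_{n=0}^{N}\sum_{m=0}^{M}q_1^nq_2^ma_{n,m}$ with $a_{n,m}\in\mathbb{H}$ (coefficients on the right); $\deg_{q_1}P$, $\deg_{q_2}P$ are the degrees in $q_1$, $q_2$. The set of these is $\mathbb{H}[q_1,q_2]$, and $\mathbb{H}[q]$ denotes the analogous one-variable polynomials $\sum q^na_n$. The $*$-product is defined by $\big(\sum q_1^nq_2^ma_{n,m}\big)*\big(\sum q_1^nq_2^mb_{n,m}\big)=\sum_{n,m}q_1^nq_2^m\sum_{r\le n,s\le m}a_{r,s}b_{n-r,m-s}$ (and analogously in one variable). The regular conjugate of $P=\sum q_1^nq_2^ma_{n,m}$ is $P^c=\sum q_1^nq_2^m\overline{a_{n,m}}$ and its symmetrization is $P^s=P*P^c=P^c*P$ (which has real coefficients). $(\mathbb{H}[q],+,* )$ is a left and right Ore domain and we let $\mathcal{L}$ be its skew field of quotients. Every $P\in\mathbb{H}[q_1,q_2]$ can be written as $P=\sum_{k=0}^{n}q_1^kP_k(q_2)$ with $P_k\in\mathbb{H}[q_2]$, and as $P=\sum_{k=0}^{r}q_2^k*\tilde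 P_k(q_1)$ with $\tilde P_k\in\mathbb{H}[q_1]$. Dieudonné determinant: for a skew field $(\mathbb F,+,\star)$, let $\overline{\mathbb F}^\star$ be the abelianization of its multiplicative group; ${\rm Det}^\star_N$ is the unique homomorphism $GL(N,\mathbb F)\to\overline{\mathbb F}^\star$ sending ${\rm diag}(\lambda_1,\dots,\lambda_N)$ to the class of $\lambda_1\star\cdots\star\lambda_N$, extended by the value $[0]$ on non-invertible matrices. Here ${\rm Det}^*_N$ is this determinant over $\mathcal L$; for a matrix with entries in $\mathbb{H}[q]$ its value has a slice regular polynomial representative, unique up to commutators, with which it is identified. Regular resultants: let $P=\sum_{k=0}^nq_1^kP_k(q_2)$, $Q=\sum_{k=0}^mq_1^kQ_k(q_2)$. The Sylvester matrix $A(q_2)$ is the $(n+m)\times(n+m)$ matrix whose $j$-th column ($1\le j\le m$) has entries $P_0,\dots,P_n$ in rows $j,\dots,j+n$ and zeros elsewhere, and whose $(m+j)$-th column ($1\le j\le n$) has entries $Q_0,\dots,Q_m$ in rows $j,\dots,j+m$ and zeros elsewhere; ${\rm Res}(P,Q;q_1):={\rm Det}^*_{n+m}(A(q_2))$. Likewise, with $P=\sum_{k=0}^rq_2^k*\tilde P_k(q_1)$, $Q=\sum_{k=0}^sq_2^k*\tilde Q_k(q_1)$, $B(q_1)$ is the $(r+s)\times(r+s)$ matrix built in the same way from $\tilde P_0,\dots,\tilde P_r$ (first $s$ columns) and $\tilde Q_0,\dots,\tilde Q_s$ (last $r$ columns), and ${\rm Res}(P,Q;q_2):={\rm Det}^*_{r+s}(B(q_1))$.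 ''${\rm Res}\equiv0$'' means it is the zero polynomial (zero class). *)

(* Defs.v *)
From HB Require Import structures.
From mathcomp Require Import all_boot all_order all_algebra.
From mathcomp Require Import ring.
From mathcomp Require Import reals.
Set Implicit Arguments. Unset Strict Implicit. Unset Printing Implicit Defensive.
Import Order.TTheory GRing.Theory Num.Theory.
Local Open Scope ring_scope.

(* Quaternion algebra (-1,-1) over a commutative ring K:               *)
(*   x = qr x + qi x i + qj x j + qk x k,  i^2=j^2=k^2=ijk=-1.          *)
Record quat (K : Type) := Quat { qr : K; qi : K; qj : K; qk : K }.

Definition quat_to (K : Type) (x : quat K) := (qr x, qi x, qj x, qk x).
Definition quat_of (K : Type) (t : K * K * K * K) :=
  let: (a, b, c, d) := t in Quat a b c d.
Lemma quat_toK (K : Type) : cancel (@quat_to K) (@quat_of K).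
Proof. by case. Qed.

HB.instance Definition _ (K : eqType) := Equality.copy (quat K) (can_type (@quat_toK K)).
HB.instance Definition _ (K : choiceType) := Choice.copy (quat K) (can_type (@quat_toK K)).

Definition qzero (K : comNzRingType) : quat K := Quat 0 0 0 0.
Definition qone (K : comNzRingType) : quat K := Quat 1 0 0 0.
Definition qadd (K : comNzRingType) (x y : quat K) : quat K :=
  Quat (qr x + qr y) (qi x + qi y) (qj x + qj y) (qk x + qk y).
Definition qopp (K : comNzRingType) (x : quat K) : quat K :=
  Quat (- qr x) (- qi x) (- qj x) (- qk x).
Definition qmul (K : comNzRingType) (x y : quat K) : quat K :=
  Quat (qr x * qr y - qi x * qi y - qj x * qj y - qk x * qk y)
       (qr x * qi y + qi x * qr y + qj x * qk y - qk x * qj y)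
       (qr x * qj y - qi x * qk y + qj x * qr y + qk x * qi y)
       (qr x * qk y + qi x * qj y - qj x * qi y + qk x * qr y).
Definition qconj (K : comNzRingType) (x : quat K) : quat K :=
  Quat (qr x) (- qi x) (- qj x) (- qk x).

Lemma qaddA (K : comNzRingType) : associative (@qadd K).
Proof. by move=> [? ? ? ?] [? ? ? ?] [? ? ? ?]; rewrite /qadd /=; congr Quat; ring. Qed.
Lemma qaddC (K : comNzRingType) : commutative (@qadd K).
Proof. by move=> [? ? ? ?] [? ? ? ?]; rewrite /qadd /=; congr Quat; ring. Qed.
Lemma qadd0 (K : comNzRingType) : left_id (@qzero K) (@qadd K).
Proof. by move=> [? ? ? ?]; rewrite /qadd /=; congr Quat; ring. Qed.
Lemma qaddN (K : comNzRingType) : left_inverse (@qzero K) (@qopp K) (@qadd K).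
Proof. by move=> [? ? ? ?]; rewrite /qadd /=; congr Quat; ring. Qed.

HB.instance Definition _ (K : comNzRingType) :=
  GRing.isZmodule.Build (quat K) (@qaddA K) (@qaddC K) (@qadd0 K) (@qaddN K).

Lemma qmulA (K : comNzRingType) : associative (@qmul K).
Proof. by move=> [? ? ? ?] [? ? ? ?] [? ? ? ?]; rewrite /qone /qmul /=; congr Quat; ring. Qed.
Lemma qmul1 (K : comNzRingType) : left_id (@qone K) (@qmul K).
Proof. by move=> [? ? ? ?]; rewrite /qone /qmul /=; congr Quat; ring. Qed.
Lemma qmulr1 (K : comNzRingType) : right_id (@qone K) (@qmul K).
Proof. by move=> [? ? ? ?]; rewrite /qone /qmul /=; congr Quat; ring. Qed.
Lemma qmulDl (K : comNzRingType) : left_distributive (@qmul K) (@qadd K).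
Proof. by move=> [? ? ? ?] [? ? ? ?] [? ? ? ?]; rewrite /qmul /= /qadd /=; congr Quat; ring. Qed.
Lemma qmulDr (K : comNzRingType) : right_distributive (@qmul K) (@qadd K).
Proof. by move=> [? ? ? ?] [? ? ? ?] [? ? ? ?]; rewrite /qmul /= /qadd /=; congr Quat; ring. Qed.
Lemma qone_neq0 (K : comNzRingType) : @qone K != 0.
Proof. by apply/eqP => -[] /eqP; rewrite oner_eq0. Qed.

HB.instance Definition _ (K : comNzRingType) :=
  GRing.Zmodule_isNzRing.Build (quat K) (@qmulA K) (@qmul1 K) (@qmulr1 K)
    (@qmulDl K) (@qmulDr K) (@qone_neq0 K).

Notation HH R := (quat (R : realType)).

(* H[q] : slice regular polynomials in one variable, with the *-product.
   Since coefficients are on the right and the *-product is the Cauchy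
   product a_r b_{n-r}, H[q] with + and the star-product is exactly MathComp's {poly H}.      *)
Notation Hpoly R := {poly HH R}.

(* H[q1,q2] : P = \sum_k q1^k P_k(q2), i.e. a polynomial in q1 whose
   coefficients P_k are in H[q2].  The *-product of {poly {poly H}} is
   \sum_{r<=n,s<=m} a_{r,s} b_{n-r,m-s}, as in the paper.              *)
Notation Hpoly2 R := {poly {poly HH R}}.

Definition reg_conj (R : realType) (P : Hpoly2 R) : Hpoly2 R :=
  map_poly (map_poly (@qconj R)) P.
Definition symmetrization (R : realType) (P : Hpoly2 R) : Hpoly2 R :=
  P * reg_conj P.

(* Exchange of the roles of q1 and q2: the coefficient of q1^n q2^m in
   P becomes the coefficient of q1^m q2^n.  Hence if
   P = \sum_k q2^k * tildeP_k(q1), then (swap12 P)`_k = tildeP_k.       *)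
Definition swap12 (R : realType) (P : Hpoly2 R) : Hpoly2 R :=
  \poly_(i < (\max_(j < size P) size (P`_j)%R)%N) \poly_(j < size P) (P`_j)`_i.

(* Sylvester matrix of p = \sum_k X^k p_k, q = \sum_k X^k q_k (degrees
   n = (size p).-1, m = (size q).-1); 0-indexed: column j < m carries
   p_0..p_n in rows j..j+n, column m+j (j < n) carries q_0..q_m in rows
   j..j+m.                                                            *)
Definition sylvester (S : nzRingType) (p q : {poly S}) :
    'M[S]_((size q).-1 + (size p).-1) :=
  let n := (size p).-1 in let m := (size q).-1 in
  \matrix_(i, j)
    if (j < m)%N then
      (if (j <= i <= j + n)%N then p`_(i - j) else 0)
    else
      (if (j - m <= i <= j - m + m)%N then q`_(i - (j - m)) else 0).

(* The skew field of quotients L of H[q].  Since every non-zero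
   f in H[q] satisfies f * f^c = f^s in R[q]\{0} (central), L is the
   quaternion algebra over the rational function field R(q):
   L = quat {fraction {poly R}}, and H[q] embeds coefficientwise.      *)
Definition Lfield (R : realType) := quat {fraction {poly R}}.

Definition embL (R : realType) (p : Hpoly R) : Lfield R :=
  Quat (tofrac (map_poly (@qr R) p)) (tofrac (map_poly (@qi R) p))
       (tofrac (map_poly (@qj R) p)) (tofrac (map_poly (@qk R) p)).

Definition invertible_over (S : nzRingType) (N : nat) (M : 'M[S]_N) : Prop :=
  exists B : 'M[S]_N, M *m B = 1%:M /\ B *m M = 1%:M.

(* Det^*_N(A) = [0]  <->  A is not invertible over L (on GL(N,L) the
   Dieudonne determinant takes values in the abelianized group of
   non-zero elements, and it is [0] exactly on non-invertible matrices). *)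
Definition Dieudonne_det_zero (R : realType) (N : nat) (A : 'M[Hpoly R]_N) : Prop :=
  ~ invertible_over (map_mx (@embL R) A).

Definition res_q1_zero (R : realType) (P Q : Hpoly2 R) : Prop :=
  Dieudonne_det_zero (sylvester P Q).

Definition res_q2_zero (R : realType) (P Q : Hpoly2 R) : Prop :=
  Dieudonne_det_zero (sylvester (swap12 P) (swap12 Q)).

(* Main.v *)
Require Import Defs.
From HB Require Import structures.
From mathcomp Require Import all_boot all_order all_algebra all_fingroup reals ring lra.
From mathcomp Require Import generic_quotient.
From mathcomp Require Import zify.
From Stdlib Require Import Classical.
Set Implicit Arguments. Unset Strict Implicit. Unset Printing Implicit Defensive.
Import Order.TTheory GRing.Theory Num.Theory.
Local Open Scope ring_scope.

Section Quat.
Variable F : comNzRingType.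
Implicit Types x y : quat F.

Lemma qmulE x y : x * y = qmul x y. Proof. by []. Qed.
Lemma qaddE x y : x + y = qadd x y. Proof. by []. Qed.
Lemma qoppE x : - x = qopp x. Proof. by []. Qed.
Lemma q0E : 0 = qzero F. Proof. by []. Qed.
Lemma q1E : 1 = qone F. Proof. by []. Qed.

Lemma qconjM x y : qconj (x * y) = qconj y * qconj x.
Proof. by case: x => ????; case: y => ????; rewrite !qmulE /qconj /qmul /=; congr Quat; ring. Qed.
Lemma qconjD x y : qconj (x + y) = qconj x + qconj y.
Proof. by case: x => ????; case: y => ????; rewrite !qaddE /qconj /qadd /=; congr Quat; ring. Qed.
Lemma qconj0 : qconj 0 = 0 :> quat F.
Proof. by rewrite /qconj /=; congr Quat; ring. Qed.
Lemma qconjK x : qconj (qconj x) = x.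
Proof. by case: x => ????; rewrite /qconj /=; congr Quat; ring. Qed.
Lemma qconj_eq0 x : (qconj x == 0) = (x == 0).
Proof.
apply/eqP/eqP => [h|->]; last exact: qconj0.
by rewrite -(qconjK x) h qconj0.
Qed.

Definition qsc (a : F) : quat F := Quat a 0 0 0.
Lemma qsc_comm a y : qsc a * y = y * qsc a.
Proof. by case: y => ????; rewrite !qmulE /qsc /qmul /=; congr Quat; ring. Qed.
Lemma qscD a b : qsc (a + b) = qsc a + qsc b.
Proof. by rewrite !qaddE /qsc /qadd /=; congr Quat; ring. Qed.
Lemma qsc0 : qsc 0 = 0. Proof. by []. Qed.

Definition qnorm x := qr x * qr x + qi x * qi x + qj x * qj x + qk x * qk x.
Lemma qmul_conj x : x * qconj x = qsc (qnorm x).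
Proof. by case: x => ????; rewrite !qmulE /qsc /qnorm /qconj /qmul /=; congr Quat; ring. Qed.
Lemma qconj_mul x : qconj x * x = qsc (qnorm x).
Proof. by case: x => ????; rewrite !qmulE /qsc /qnorm /qconj /qmul /=; congr Quat; ring. Qed.
End Quat.

Section QuatField.
Variable F : fieldType.
Definition qinv (x : quat F) : quat F :=
  let n := qnorm x in Quat (qr x / n) (- qi x / n) (- qj x / n) (- qk x / n).
Lemma qinvP (x : quat F) : qnorm x != 0 -> x * qinv x = 1 /\ qinv x * x = 1.
Proof.
case: x => a b c d; rewrite /qnorm /= => hn.
split; rewrite /qinv /= qmulE /qmul /= q1E /qone; congr Quat; rewrite /qnorm /=; field; exact: hn.
Qed.
End QuatField.


Lemma size_map_le (A B : nzRingType) (f : A -> B) (p : {poly A}) :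
  f 0 = 0 -> (size (map_poly f p) <= size p)%N.
Proof.
move=> f0; apply/leq_sizeP => j hj; rewrite coef_map_id0 //.
by rewrite nth_default.
Qed.

Section QPoly.
Variable F : fieldType.
Local Notation Q := (quat F).
Implicit Types A B : {poly Q}.

Definition pconj A : {poly Q} := map_poly (@qconj F) A.
Lemma coef_pconj A i : (pconj A)`_i = qconj A`_i.
Proof. by rewrite coef_map_id0 // qconj0. Qed.
Lemma pconjD A B : pconj (A + B) = pconj A + pconj B.
Proof. by apply/polyP => i; rewrite coefD !coef_pconj coefD qconjD. Qed.
Lemma pconjN A : pconj (- A) = - pconj A.
Proof.
apply: (@addrI _ (pconj A)); rewrite -pconjD !subrr.
by apply/polyP => i; rewrite coef_pconj coef0 qconj0.
Qed.
Lemma pconjK A : pconj (pconj A) = A.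
Proof. by apply/polyP => i; rewrite !coef_pconj qconjK. Qed.
Lemma qconj_sum I (r : seq I) (P : pred I) (G : I -> Q) :
  qconj (\sum_(i <- r | P i) G i) = \sum_(i <- r | P i) qconj (G i).
Proof. by apply: big_morph; [exact: qconjD | exact: qconj0]. Qed.
Lemma pconjM A B : pconj (A * B) = pconj B * pconj A.
Proof.
apply/polyP => i; rewrite coef_pconj coefM coefMr qconj_sum.
by apply: eq_bigr => j _; rewrite qconjM !coef_pconj.
Qed.
Lemma size_pconj A : size (pconj A) = size A.
Proof.
apply/eqP; rewrite eqn_leq size_map_le ?qconj0 //=.
by rewrite -{1}(pconjK A) size_map_le ?qconj0.
Qed.
Lemma lead_pconj A : lead_coef (pconj A) = qconj (lead_coef A).
Proof. by rewrite !lead_coefE size_pconj coef_pconj. Qed.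

Definition anis := forall x : Q, qnorm x = 0 -> x = 0.

Lemma size_symm A : anis -> size (A * pconj A) = (size A + size A).-1.
Proof.
move=> an; have [->|nA] := eqVneq A 0.
  by rewrite mul0r size_poly0.
rewrite size_proper_mul ?size_pconj // lead_pconj qmul_conj.
apply/eqP => /(congr1 (@qr F)) /= /eqP h.
have : qnorm (lead_coef A) = 0 by apply/eqP.
by move/an/eqP; rewrite lead_coef_eq0 (negPf nA).
Qed.

Lemma symm_eq0 A : anis -> (A * pconj A == 0) = (A == 0).
Proof.
move=> an; rewrite -!size_poly_eq0 size_symm //.
move: (size A) => k; case: k => [|k] //; by rewrite addSn addnS.
Qed.

Lemma selfconj_sc (x : Q) : (2%:R : F) != 0 -> qconj x = x -> x = qsc (qr x).
Proof.
move=> h2; case: x => a b c d; rewrite /qconj /qsc /= => -[hb hc hd].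
have z : forall y : F, - y = y -> y = 0.
  move=> y hy; apply/eqP; have : y * 2%:R == 0 by rewrite mulr_natr mulr2n -{1}hy addNr.
  by rewrite mulf_eq0 (negPf h2) orbF.
by rewrite (z _ hb) (z _ hc) (z _ hd).
Qed.

Lemma central_selfconj Z X : (2%:R : F) != 0 -> pconj Z = Z -> Z * X = X * Z.
Proof.
move=> h2 hZ; apply/polyP => i; rewrite coefM coefMr; apply: eq_bigr => j _.
have -> : Z`_j = qsc (qr Z`_j).
  by apply: selfconj_sc => //; rewrite -coef_pconj hZ.
exact: qsc_comm.
Qed.

Lemma symm_selfconj A : pconj (A * pconj A) = A * pconj A.
Proof. by rewrite pconjM pconjK. Qed.
End QPoly.

Section Frac.
Local Open Scope quotient_scope.

Lemma frac_rep (A : idomainType) (x : {fraction A}) :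
  exists n d : A, d != 0 /\ x * tofrac d = tofrac n.
Proof.
elim/quotW: x => r; exists (\n_r), (\d_r); split; first exact: denom_ratioP.
rewrite /FracField.tofrac; unlock.
change (FracField.mul (\pi_(FracField.type A) r) (\pi_(FracField.type A) (Ratio \d_r 1)) = \pi_(FracField.type A) (Ratio \n_r 1)).
rewrite -FracField.pi_mul; apply/eqmodP.
rewrite /= FracField.equivfE /FracField.mulf !numden_Ratio ?mulf_neq0 ?oner_neq0 ?denom_ratioP //.
by rewrite !mulr1 mulrC.
Qed.

Lemma poly_allroots_eq0 (R : realType) (p : {poly R}) : (forall t, p.[t] = 0) -> p = 0.
Proof.
move=> h; apply: (@roots_geq_poly_eq0 _ p [seq i%:R | i <- iota 0 (size p)]).
- by apply/allP => t /mapP [i _ ->]; apply/eqP; rewrite h.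
- rewrite map_inj_uniq ?iota_uniq // => i j /eqP; rewrite eqr_nat => /eqP.
  by [].
- by rewrite size_map size_iota.
Qed.

Lemma sos4_poly (R : realType) (a b c d : {poly R}) :
  a * a + b * b + c * c + d * d = 0 -> a = 0.
Proof.
move=> h; apply: poly_allroots_eq0 => t.
have := congr1 (fun p => p.[t]) h; rewrite /= !hornerE => h2.
have ha := sqr_ge0 a.[t]; have hb := sqr_ge0 b.[t]; have hc := sqr_ge0 c.[t]; have hd := sqr_ge0 d.[t].
rewrite !expr2 in ha hb hc hd.
apply/eqP; rewrite -sqrf_eq0 expr2 eq_le; apply/andP; split; last by [].
lra.
Qed.

Lemma sos4_frac (R : realType) (a b c d : {fraction {poly R}}) :
  a * a + b * b + c * c + d * d = 0 -> a = 0.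
Proof.
move=> h.
have [na [da [hda ea]]] := frac_rep a.
have [nb [db [hdb eb]]] := frac_rep b.
have [nc [dc [hdc ec]]] := frac_rep c.
have [nd [dd [hdd ed]]] := frac_rep d.
have key : tofrac ((na * (db * dc * dd)) * (na * (db * dc * dd)) + (nb * (da * dc * dd)) * (nb * (da * dc * dd))
   + (nc * (da * db * dd)) * (nc * (da * db * dd)) + (nd * (da * db * dc)) * (nd * (da * db * dc)))
   = (a * a + b * b + c * c + d * d) * (tofrac (da * db * dc * dd)) ^+ 2.
  rewrite !rmorphD !rmorphM /= -ea -eb -ec -ed; ring.
move: key; rewrite h mul0r => /eqP; rewrite tofrac_eq0 => /eqP /sos4_poly /eqP.
rewrite !mulf_eq0 (negPf hdb) (negPf hdc) (negPf hdd) !orbF => /eqP na0.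
by move: ea; rewrite na0 rmorph0 => /eqP; rewrite mulf_eq0 tofrac_eq0 (negPf hda) orbF => /eqP.
Qed.
End Frac.

Lemma inv_mulmx (D : nzRingType) N (A B : 'M[D]_N) :
  invertible_over A -> invertible_over B -> invertible_over (A *m B).
Proof.
move=> [A' [h1 h2]] [B' [h3 h4]]; exists (B' *m A'); split.
  by rewrite mulmxA -(mulmxA A) h3 mulmx1 h1.
by rewrite mulmxA -(mulmxA B') h2 mulmx1 h4.
Qed.

Lemma core_inv (D : nzRingType) (inv : D -> D)
  (Hinv : forall x, x != 0 -> x * inv x = 1 /\ inv x * x = 1) :
  forall N (M : 'M[D]_N), (forall v : 'cV[D]_N, M *m v = 0 -> v = 0) ->
  invertible_over M.
Proof.
elim=> [|N IH] M inj.
  by exists 0; split; apply/matrixP => -[].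
case: (pickP (fun i => M i 0 != 0)) => [i Hi | H0]; last first.
  have := inj (delta_mx 0 0); rewrite -colE.
  have -> : col 0 M = 0.
    by apply/matrixP => k l; rewrite !mxE; move/negbT: (H0 k); rewrite negbK => /eqP.
  move=> /(_ erefl) /matrixP /(_ 0 0); rewrite !mxE !eqxx /= => /eqP.
  by rewrite oner_eq0.
pose T : 'M[D]_N.+1 := tperm_mx 0 i.
have TT : T *m T = 1%:M by rewrite /T /tperm_mx -perm_mxM tperm2 perm_mx1.
pose M1 : 'M[D]_(1 + N) := T *m M.
have EM : M = T *m M1 by rewrite /M1 mulmxA TT mul1mx.
have inj1 : forall v : 'cV[D]_(1 + N), M1 *m v = 0 -> v = 0.
  by move=> v Hv; apply: inj; rewrite EM -mulmxA Hv mulmx0.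
rewrite EM; apply: inv_mulmx; first by exists T.
have piv : M1 0 0 != 0 by rewrite /M1 -xrowE /xrow /row_perm mxE tpermL.
clear EM inj TT.
clearbody M1.
rewrite -[M1]submxK.
set a := ulsubmx M1; set b := ursubmx M1; set c := dlsubmx M1; set d := drsubmx M1.
have a00 : a 0 0 = M1 0 0 by rewrite /a !mxE; congr (M1 _ _); apply: val_inj.
have Ha : a 0 0 != 0 by rewrite a00.
have EM1 : M1 = block_mx a b c d by rewrite submxK.
rewrite EM1 in inj1; clearbody a b c d; clear a00 piv EM1.
pose ai : 'M[D]_1 := (inv (a 0 0))%:M.
have [aai aia] : a *m ai = 1%:M /\ ai *m a = 1%:M.
  have [h1 h2] := Hinv _ Ha.
  split; apply/matrixP => x y; rewrite (ord1 x) (ord1 y) !mxE big_ord1 !mxE /=.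
    by rewrite h1.
  by rewrite h2.
pose Sc := d - c *m ai *m b.
have injS : forall w : 'cV[D]_N, Sc *m w = 0 -> w = 0.
  move=> w Hw.
  have := inj1 (col_mx (- (ai *m b *m w)) w).
  rewrite mul_block_col.
  rewrite !mulmxN !mulmxA aai mul1mx addNr.
  have -> : - (c *m ai *m b *m w) + d *m w = Sc *m w.
    by rewrite /Sc mulmxBl addrC.
  rewrite Hw col_mx0 => /(_ erefl) /(congr1 dsubmx); rewrite col_mxKd => ->.
  by apply/matrixP => x y; rewrite !mxE.
have [E [h1 h2]] := IH Sc injS.
have -> : block_mx a b c d =
   block_mx 1%:M 0 (c *m ai) 1%:M *m block_mx a 0 0 Sc *m block_mx 1%:M (ai *m b) 0 1%:M.
  rewrite !mulmx_block !(mulmx0, mul0mx, mulmx1, mul1mx, addr0, add0r).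
  by rewrite -!mulmxA aia mulmx1 mulmxA /Sc aai mul1mx mulmxA addrC subrK.
apply: (@inv_mulmx _ (1 + N)); first apply: (@inv_mulmx _ (1 + N)).
- exists (block_mx 1%:M 0 (- (c *m ai)) 1%:M).
  rewrite !mulmx_block !(mulmx0, mul0mx, mulmx1, mul1mx, addr0, add0r, addrN, addNr).
  by rewrite -!scalar_mx_block.
- exists (block_mx ai 0 0 E).
  rewrite !mulmx_block !(mulmx0, mul0mx, mulmx1, mul1mx, addr0, add0r) aai aia h1 h2.
  by rewrite -!scalar_mx_block.
- exists (block_mx 1%:M (- (ai *m b)) 0 1%:M).
  rewrite !mulmx_block !(mulmx0, mul0mx, mulmx1, mul1mx, addr0, add0r, addrN, addNr).
  by rewrite -!scalar_mx_block.
Qed.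

Section Syl.
Variable D : nzRingType.
Implicit Types p q A B : {poly D}.

Definition syl (m n : nat) p q : 'M[D]_(m + n) :=
  \matrix_(i, j)
    if (j < m)%N then
      (if (j <= i <= j + n)%N then p`_(i - j) else 0)
    else
      (if (j - m <= i <= j - m + m)%N then q`_(i - (j - m)) else 0).

Lemma sylvesterE p q : sylvester p q = syl (size q).-1 (size p).-1 p q.
Proof. by []. Qed.

Lemma sum_trunc (V : zmodType) (G : nat -> V) a b :
  (forall k, (b <= k)%N -> G k = 0) -> (b <= a)%N ->
  \sum_(k < a) G k = \sum_(k < b) G k.
Proof.
move=> hG hab; rewrite -(subnKC hab) big_split_ord /= [X in _ + X]big1 ?addr0 //.
by move=> k _; apply: hG; rewrite leq_addr.
Qed.

Lemma block_sum p (c e i : nat) (w : 'I_c -> D) :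
  (size p <= e.+1)%N ->
  \sum_(j < c) (if (j <= i <= j + e)%N then p`_(i - j) else 0) * w j
  = (p * \poly_(j < c) (if insub j is Some k then w k else 0))`_i.
Proof.
move=> sp; set A := \poly_(j < c) _.
pose G k := if (k <= i)%N then p`_(i - k) * A`_k else 0.
rewrite coefMr.
transitivity (\sum_(k < c) G k).
  apply: eq_bigr => j _; rewrite /G /A coef_poly ltn_ord.
  case: insubP => [k _ /val_inj -> | ]; last by rewrite ltn_ord.
  case: (leqP j i) => hji /=; last by rewrite mul0r.
  case: leqP => hi //; rewrite nth_default ?mul0r //.
  by rewrite (leq_trans sp) // ltn_subRL.
transitivity (\sum_(k < c + i.+1) G k).
  by rewrite (@sum_trunc _ G (c + i.+1) c) // ?leq_addr // => k hk; rewrite /G /A coef_poly ltnNge hk /= mulr0; case: ifP.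
rewrite (@sum_trunc _ G (c + i.+1) i.+1) ?leq_addl //; last first.
  by move=> k hk; rewrite /G leqNgt hk.
by apply: eq_bigr => k _; rewrite /G -ltnS ltn_ord.
Qed.

Definition vA m n (v : 'cV[D]_(m + n)) : {poly D} :=
  \poly_(j < m) (if insub j is Some k then v (lshift n k) 0 else 0).
Definition vB m n (v : 'cV[D]_(m + n)) : {poly D} :=
  \poly_(j < n) (if insub j is Some k then v (rshift m k) 0 else 0).

Lemma syl_mul m n p q (v : 'cV[D]_(m + n)) (i : 'I_(m + n)) :
  (size p <= n.+1)%N -> (size q <= m.+1)%N ->
  (syl m n p q *m v) i 0 = (p * vA v + q * vB v)`_i.
Proof.
move=> sp sq; rewrite mxE big_split_ord /= coefD; congr (_ + _).
  rewrite -(block_sum _ _ sp); apply: eq_bigr => j _.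
  by rewrite mxE /= ltn_ord.
rewrite -(block_sum _ _ sq); apply: eq_bigr => j _.
by rewrite mxE /= ltnNge leq_addr /= addKn.
Qed.

Lemma vA_col m n A B : (size A <= m)%N ->
  vA (col_mx (\col_(j < m) A`_j) (\col_(j < n) B`_j)) = A.
Proof.
move=> sA; apply/polyP => k; rewrite coef_poly.
case: ltnP => hk; last by rewrite nth_default // (leq_trans sA).
case: insubP => [k' _ hk'|]; last by rewrite hk.
by rewrite col_mxEu mxE hk'.
Qed.

Lemma vB_col m n A B : (size B <= n)%N ->
  vB (col_mx (\col_(j < m) A`_j) (\col_(j < n) B`_j)) = B.
Proof.
move=> sB; apply/polyP => k; rewrite coef_poly.
case: ltnP => hk; last by rewrite nth_default // (leq_trans sB).
case: insubP => [k' _ hk'|]; last by rewrite hk.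
by rewrite col_mxEd mxE hk'.
Qed.

Lemma vA0 m n : vA (0 : 'cV[D]_(m + n)) = 0.
Proof. by apply/polyP => k; rewrite coef_poly coef0; case: ifP => //; case: insub => // ?; rewrite mxE. Qed.

Lemma vB0 m n : vB (0 : 'cV[D]_(m + n)) = 0.
Proof. by apply/polyP => k; rewrite coef_poly coef0; case: ifP => //; case: insub => // ?; rewrite mxE. Qed.

Lemma size_comb m n p q A B : (size p <= n.+1)%N -> (size q <= m.+1)%N ->
  (size A <= m)%N -> (size B <= n)%N -> (size (p * A + q * B)%R <= m + n)%N.
Proof.
move=> sp sq sA sB; rewrite (leq_trans (size_add _ _)) // geq_max; apply/andP; split.
  apply: (leq_trans (size_polyMleq _ _)); rewrite -subn1.
  by rewrite (leq_trans (leq_sub2r 1 (leq_add sp sA))) // addSn subn1 /= addnC.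
apply: (leq_trans (size_polyMleq _ _)); rewrite -subn1.
by rewrite (leq_trans (leq_sub2r 1 (leq_add sq sB))) // addSn subn1 /=.
Qed.

Lemma size_vA m n (v : 'cV[D]_(m + n)) : (size (vA v) <= m)%N.
Proof. exact: size_poly. Qed.
Lemma size_vB m n (v : 'cV[D]_(m + n)) : (size (vB v) <= n)%N.
Proof. exact: size_poly. Qed.

Lemma kernel_polys m n p q (v : 'cV[D]_(m + n)) :
  (size p <= n.+1)%N -> (size q <= m.+1)%N -> syl m n p q *m v = 0 -> v != 0 ->
  p * vA v + q * vB v = 0 /\ ((vA v != 0) || (vB v != 0)).
Proof.
move=> sp sq hv vn0; split.
  apply/polyP => i; rewrite coef0.
  case: (ltnP i (m + n)) => hi.
    by rewrite -[i]/(nat_of_ord (Ordinal hi)) -syl_mul // hv mxE.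
  by rewrite nth_default // (leq_trans _ hi) // size_comb // ?size_vA ?size_vB.
apply: contraNT vn0; rewrite negb_or !negbK => /andP [/eqP hA /eqP hB].
apply/eqP/matrixP => i j; rewrite (ord1 j) mxE.
case: (splitP i) => k hk.
  have := congr1 (fun P : {poly D} => P`_k) hA; rewrite coef_poly ltn_ord coef0.
  case: insubP => [k' _ hk'|]; last by rewrite ltn_ord.
  by move=> <-; congr (v _ _); apply: val_inj; rewrite /= hk'.
have := congr1 (fun P : {poly D} => P`_k) hB; rewrite coef_poly ltn_ord coef0.
case: insubP => [k' _ hk'|]; last by rewrite ltn_ord.
by move=> <-; congr (v _ _); apply: val_inj; rewrite /= hk'.
Qed.

Lemma polys_kernel m n p q A B :
  (size p <= n.+1)%N -> (size q <= m.+1)%N -> (size A <= m)%N -> (size B <= n)%N ->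
  p * A + q * B = 0 -> (A != 0) || (B != 0) -> ~ invertible_over (syl m n p q).
Proof.
move=> sp sq sA sB hAB nz [C [h1 h2]].
pose v := col_mx (\col_(j < m) A`_j) (\col_(j < n) B`_j).
have hv : syl m n p q *m v = 0.
  apply/matrixP => i j; rewrite (ord1 j) syl_mul // vA_col // vB_col // hAB.
  by rewrite coef0 mxE.
have : v = 0 by rewrite -[v]mul1mx -h2 -mulmxA hv mulmx0.
have eA : vA v = A by exact: vA_col.
have eB : vB v = B by exact: vB_col.
move=> v0; move: nz; rewrite -eA -eB v0 vA0 vB0.
by rewrite eqxx.
Qed.
End Syl.

Section Comp.
Variable F : comNzRingType.
Lemma qr_zmod : zmod_morphism (@qr F). Proof. by []. Qed.
Lemma qi_zmod : zmod_morphism (@qi F). Proof. by []. Qed.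
Lemma qj_zmod : zmod_morphism (@qj F). Proof. by []. Qed.
Lemma qk_zmod : zmod_morphism (@qk F). Proof. by []. Qed.
End Comp.
HB.instance Definition _ (F : comNzRingType) := GRing.isZmodMorphism.Build (quat F) F (@qr F) (@qr_zmod F).
HB.instance Definition _ (F : comNzRingType) := GRing.isZmodMorphism.Build (quat F) F (@qi F) (@qi_zmod F).
HB.instance Definition _ (F : comNzRingType) := GRing.isZmodMorphism.Build (quat F) F (@qj F) (@qj_zmod F).
HB.instance Definition _ (F : comNzRingType) := GRing.isZmodMorphism.Build (quat F) F (@qk F) (@qk_zmod F).

Section Emb.
Variable R : realType.
Local Notation K := {fraction {poly R}}.
Local Notation mr p := (map_poly (@qr R) p).
Local Notation mi p := (map_poly (@qi R) p).
Local Notation mj p := (map_poly (@qj R) p).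
Local Notation mk p := (map_poly (@qk R) p).

Lemma mrM (p q : Hpoly R) : mr (p * q) = mr p * mr q - mi p * mi q - mj p * mj q - mk p * mk q.
Proof.
apply/polyP => i; rewrite !(coefB, coef_map, coefM) /= raddf_sum -!sumrB.
by apply: eq_bigr => j _; rewrite !coef_map.
Qed.
Lemma miM (p q : Hpoly R) : mi (p * q) = mr p * mi q + mi p * mr q + mj p * mk q - mk p * mj q.
Proof.
apply/polyP => i; rewrite !(coefB, coefD, coef_map, coefM) /= raddf_sum; do 3 rewrite -?big_split -?sumrB.
by apply: eq_bigr => j _; rewrite !coef_map.
Qed.
Lemma mjM (p q : Hpoly R) : mj (p * q) = mr p * mj q - mi p * mk q + mj p * mr q + mk p * mi q.
Proof.
apply/polyP => i; rewrite !(coefB, coefD, coef_map, coefM) /= raddf_sum; do 3 rewrite -?big_split -?sumrB.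
by apply: eq_bigr => j _; rewrite !coef_map.
Qed.
Lemma mkM (p q : Hpoly R) : mk (p * q) = mr p * mk q + mi p * mj q - mj p * mi q + mk p * mr q.
Proof.
apply/polyP => i; rewrite !(coefB, coefD, coef_map, coefM) /= raddf_sum; do 3 rewrite -?big_split -?sumrB.
by apply: eq_bigr => j _; rewrite !coef_map.
Qed.

Lemma embL_zmod : zmod_morphism (@embL R).
Proof.
move=> p q; rewrite /embL !raddfB; by [].
Qed.
Lemma embL_monoid : monoid_morphism (@embL R).
Proof.
split.
  rewrite /embL -polyC1 !map_polyC /= !rmorph0 rmorph1 /=; by [].
move=> p q; rewrite /embL mrM miM mjM mkM qmulE /qmul /=.
by rewrite !(rmorphB, rmorphD, rmorphM).
Qed.
End Emb.
HB.instance Definition _ (R : realType) := GRing.isZmodMorphism.Build (Hpoly R) (Lfield R) (@embL R) (@embL_zmod R).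
HB.instance Definition _ (R : realType) := GRing.isMonoidMorphism.Build (Hpoly R) (Lfield R) (@embL R) (@embL_monoid R).

Lemma embL_conj (R : realType) (p : Hpoly R) : embL (map_poly (@qconj R) p) = qconj (embL p).
Proof.
rewrite /embL /qconj /=; congr Quat; rewrite -?rmorphN; congr tofrac; apply/polyP => i;
  rewrite ?coefN !coef_map_id0 //; exact: qconj0.
Qed.


Lemma polyP2 (D : nzRingType) (X Y : {poly {poly D}}) :
  (forall i j, X`_i`_j = Y`_i`_j) -> X = Y.
Proof. by move=> h; apply/polyP => i; apply/polyP => j; apply: h. Qed.

Lemma coef_swap (R : realType) (P : Hpoly2 R) i j : (swap12 P)`_i`_j = P`_j`_i.
Proof.
rewrite /swap12 coef_poly; case: ltnP => hi.
  rewrite coef_poly; case: ltnP => hj //.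
  by rewrite (nth_default _ hj) coef0.
case: (ltnP j (size P)) => hj; last by rewrite (nth_default _ hj) !coef0.
rewrite coef0 nth_default // (leq_trans _ hi) //.
exact: (@leq_bigmax _ (fun k : 'I_(size P) => size P`_k) (Ordinal hj)).
Qed.

Lemma swapM (R : realType) (X Y : Hpoly2 R) : swap12 (X * Y) = swap12 X * swap12 Y.
Proof.
apply: polyP2 => i j; rewrite coef_swap !coefM !coef_sum.
under eq_bigr do rewrite coefM.
under [RHS]eq_bigr do rewrite coefM.
rewrite exchange_big /=; apply: eq_bigr => a _; apply: eq_bigr => b _.
by rewrite !coef_swap.
Qed.

Lemma swap_conj (R : realType) (P : Hpoly2 R) : swap12 (reg_conj P) = reg_conj (swap12 P).
Proof.
apply: polyP2 => i j; rewrite coef_swap /reg_conj !coef_map_id0 ?map_poly0 //.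
by rewrite coef_swap.
by rewrite qconj0.
by rewrite qconj0.
Qed.

Lemma swap_symm (R : realType) (P : Hpoly2 R) :
  swap12 (symmetrization P) = symmetrization (swap12 P).
Proof. by rewrite /symmetrization swapM swap_conj. Qed.

Section Main.
Variable R : realType.
Local Notation K := {fraction {poly R}}.
Local Notation L := (Lfield R).

Lemma anisR : anis R.
Proof.
case=> a b c d; rewrite /qnorm /= => h.
have ha := sqr_ge0 a; have hb := sqr_ge0 b; have hc := sqr_ge0 c; have hd := sqr_ge0 d.
rewrite !expr2 in ha hb hc hd.
have a0 : a * a = 0 by lra.
have b0 : b * b = 0 by lra.
have c0 : c * c = 0 by lra.
have d0 : d * d = 0 by lra.
move: a0 b0 c0 d0 => /eqP; rewrite mulf_eq0 orbb => /eqP ->.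
move=> /eqP; rewrite mulf_eq0 orbb => /eqP ->.
move=> /eqP; rewrite mulf_eq0 orbb => /eqP ->.
by move=> /eqP; rewrite mulf_eq0 orbb => /eqP ->.
Qed.

Lemma anisK : anis K.
Proof.
case=> a b c d; rewrite /qnorm /= => h.
rewrite (sos4_frac h).
rewrite (@sos4_frac _ b a c d); last by rewrite -h; ring.
rewrite (@sos4_frac _ c a b d); last by rewrite -h; ring.
rewrite (@sos4_frac _ d a b c); last by rewrite -h; ring.
by [].
Qed.

Lemma twoK : (2%:R : K) != 0.
Proof.
rewrite -(rmorph_nat (@tofrac _)) tofrac_eq0 -polyC_natr polyC_eq0.
by rewrite pnatr_eq0.
Qed.

Lemma map_syl m n (p q : Hpoly2 R) :
  map_mx (@embL R) (syl m n p q) = syl m n (map_poly (@embL R) p) (map_poly (@embL R) q).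
Proof.
apply/matrixP => i j; rewrite !mxE.
by case: ifP => _; case: ifP => _; rewrite ?coef_map ?rmorph0.
Qed.

Lemma size_sym2 (P : Hpoly2 R) : size (symmetrization P) = (size P + size P).-1.
Proof.
have [->|nP] := eqVneq P 0; first by rewrite /symmetrization mul0r size_poly0.
have e : reg_conj P = map_poly (@pconj R) P by [].
rewrite /symmetrization e size_proper_mul.
  by rewrite size_map_poly_id0 // -size_poly_eq0 size_pconj size_poly_eq0 lead_coef_eq0.
rewrite lead_coef_map_id0; last first.
  by rewrite -size_poly_eq0 size_pconj size_poly_eq0 lead_coef_eq0.
  by rewrite /pconj map_poly0.
by rewrite symm_eq0 ?lead_coef_eq0 //; exact: anisR.
Qed.

Lemma embS (P : Hpoly2 R) :
  map_poly (@embL R) (symmetrization P) = map_poly (@embL R) P * pconj (map_poly (@embL R) P).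
Proof.
rewrite /symmetrization rmorphM /=; congr (_ * _).
apply/polyP => i; rewrite coef_pconj !coef_map /reg_conj coef_map_id0 ?map_poly0 //.
exact: embL_conj.
Qed.

Lemma q1_part (P Q : Hpoly2 R) :
  res_q1_zero P Q -> res_q1_zero (symmetrization P) (symmetrization Q).
Proof.
rewrite /res_q1_zero /Dieudonne_det_zero !sylvesterE !map_syl embS embS.
set n := (size P).-1; set m := (size Q).-1.
set p := map_poly (@embL R) P; set q := map_poly (@embL R) Q.
move=> hni.
have [v [hv vn0]] : exists v : 'cV[L]_(m + n), syl m n p q *m v = 0 /\ v != 0.
  have Hinv : forall x : L, x != 0 -> x * qinv x = 1 /\ qinv x * x = 1.
    move=> x hx; apply: qinvP; apply: contra hx => /eqP /anisK ->; by [].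
  apply: NNPP => H; apply: hni; apply: (core_inv Hinv).
  move=> v hv; apply: NNPP => hv0; apply: H; exists v; split => //; exact/eqP.
have sp : (size p <= n.+1)%N.
  by rewrite (leq_trans (size_map_le _ _)) ?rmorph0 // /n leqSpred.
have sq : (size q <= m.+1)%N.
  by rewrite (leq_trans (size_map_le _ _)) ?rmorph0 // /m leqSpred.
have [hAB nz] := kernel_polys sp sq hv vn0.
move: (size_vA v) (size_vB v) hAB nz; set A := vA v; set B := vB v => sA sB hAB nz.
have two := twoK.
have cA : forall X, A * pconj A * X = X * (A * pconj A).
  by move=> X; apply: central_selfconj => //; exact: symm_selfconj.
have cB : forall X, B * pconj B * X = X * (B * pconj B).
  by move=> X; apply: central_selfconj => //; exact: symm_selfconj.
apply: (@polys_kernel _ _ _ _ _ (A * pconj A) (- (B * pconj B))).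
- by rewrite -(embS P) (leq_trans (size_map_le _ _)) ?rmorph0 // leqSpred.
- by rewrite -(embS Q) (leq_trans (size_map_le _ _)) ?rmorph0 // leqSpred.
- rewrite (leq_trans (size_polyMleq _ _)) // size_pconj size_sym2.
  move: sA; rewrite /m; move: (size A) (size Q) => a b; lia.
- rewrite size_opp (leq_trans (size_polyMleq _ _)) // size_pconj size_sym2.
  move: sB; rewrite /n; move: (size B) (size P) => a b; lia.
- have e1 : p * pconj p * (A * pconj A) = (p * A) * pconj (p * A).
    by rewrite pconjM -mulrA -cA !mulrA.
  have e2 : q * pconj q * (B * pconj B) = (q * B) * pconj (q * B).
    by rewrite pconjM -mulrA -cB !mulrA.
  have hpA : p * A = - (q * B) by apply/eqP; rewrite -addr_eq0 hAB.
  by rewrite mulrN e1 e2 hpA pconjN mulrNN subrr.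
- by rewrite oppr_eq0 !symm_eq0 //; exact: anisK.
Qed.
End Main.

Theorem proposition4p8 (R : realType) (P Q : Hpoly2 R) :
  (res_q1_zero P Q -> res_q1_zero (symmetrization P) (symmetrization Q)) /\
  (res_q2_zero P Q -> res_q2_zero (symmetrization P) (symmetrization Q)).
Proof.
split; first exact: q1_part.
rewrite /res_q2_zero !swap_symm; exact: q1_part.
Qed.
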